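(* Let $\pi$ be a permutation of $\{1,\dots,n\}$ and consider forkstack sorting with unlimited capacities ($s=t=\infty$). Then $\pi$ is not sortable if and only if every allowable sequence of moves after which the input stack is empty produces, at some moment, the dreaded 13 in the working stack.
   Context: Forkstack sorting with capacities $s,t\in\{1,2,3,\dots\}\cup\{\infty\}$: a permutation $\pi=\pi_1\pi_2\cdots\pi_n$ of $\{1,\dots,n\}$ is placed on an input stack with $\pi_1$ on top and $\pi_n$ at the bottom; a working stack and an output stack are initially empty. A move is either (i) remove the top $k$ elements of the input stack, $1\le k\le s$, and place them as a block, with their relative order unchanged, on top of the working stack; or (ii) remove the top $l$ elements of the working stack, $1\le l\le t$, and place them as a block, with relative order unchanged, on top of the output stack. $\pi$ is sortable if some finite sequence of moves ends with the input and working stacks empty and the output stack reading $1,2,\dots,n$ from top to bottom. A sequence of moves is allowable if, after performing it, the output stack read from top to bottom is $k,k+1,\dots,n$ for some $k$ (or is empty). The dreaded 13 occurs at a moment if the working stack then contains an element $a$ lying immediately above an element $b$ with $a<b-1$. *)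

(* Defs.v *)
From mathcomp Require Import all_boot.
Set Implicit Arguments. Unset Strict Implicit. Unset Printing Implicit Defensive.

(* Stacks are lists read from top (head) to bottom. *)
Record fstate := FState { inp : seq nat; work : seq nat; outp : seq nat }.

Inductive fmove := MoveIn of nat | MoveOut of nat.

Definition fstep (st : fstate) (m : fmove) : option fstate :=
  match m with
  | MoveIn k =>
      if (0 < k) && (k <= size (inp st)) then
        Some (FState (drop k (inp st)) (take k (inp st) ++ work st) (outp st))
      else None
  | MoveOut l =>
      if (0 < l) && (l <= size (work st)) then
        Some (FState (inp st) (drop l (work st)) (take l (work st) ++ outp st))
      else None
  end.

Fixpoint ftrace (st : fstate) (ms : seq fmove) : option (seq fstate) :=
  match ms with
  | [::] => Some [:: st]
  | m :: ms' =>
      match fstep st m with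
      | Some st' => omap (cons st) (ftrace st' ms')
      | None => None
      end
  end.

Definition finit (pi : seq nat) : fstate := FState pi [::] [::].

Definition fsortable (n : nat) (pi : seq nat) : Prop :=
  exists ms tr, ftrace (finit pi) ms = Some tr /\
    last (finit pi) tr = FState [::] [::] (iota 1 n).

Definition allowable_out (n : nat) (o : seq nat) : Prop :=
  exists k, 1 <= k <= n.+1 /\ o = iota k (n.+1 - k).

Definition dreaded13 (w : seq nat) : Prop :=
  exists i, i.+1 < size w /\ (nth 0 w i).+1 < nth 0 w i.+1.

(* Main.v *)
Require Import Defs.
From mathcomp Require Import all_boot.
From mathcomp Require Import zify.
From Stdlib Require Import Classical_Prop.
Set Implicit Arguments. Unset Strict Implicit.

Lemma ftrace_head st ms tr : ftrace st ms = Some tr -> exists tr', tr = st :: tr'.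
Proof.
case: ms => [|m ms] /=; first by case=> <-; exists [::].
case: (fstep st m) => // st'; case: (ftrace st' ms) => //= t [<-]; by exists t.
Qed.

Lemma ftrace_cons st m ms st' tr : fstep st m = Some st' -> ftrace st' ms = Some tr ->
  ftrace st (m :: ms) = Some (st :: tr) /\ last st (st :: tr) = last st' tr.
Proof.
move=> Hs Ht /=; rewrite Hs Ht; split => //.
by have [tr' ->] := ftrace_head Ht.
Qed.

Definition reach st st' := exists ms tr, ftrace st ms = Some tr /\ last st tr = st'.

Lemma reach_refl st : reach st st.
Proof. by exists [::], [:: st]. Qed.

Lemma reach_step st m st' st'' : fstep st m = Some st' -> reach st' st'' -> reach st st''.
Proof.
move=> Hs [ms [tr [Ht Hl]]]; have [H1 H2] := ftrace_cons Hs Ht.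
by exists (m :: ms), (st :: tr); rewrite H2.
Qed.

Lemma reach_trace st ms tr fin : ftrace st ms = Some tr -> reach (last st tr) fin -> reach st fin.
Proof.
elim: ms st tr => [|m ms IH] st tr /=; first by case=> <-.
case Hs: (fstep st m) => [st'|] //; case Ht: (ftrace st' ms) => [t|] //= [<-].
have [tr' Et] := ftrace_head Ht. rewrite Et /= => Hr.
apply: (reach_step Hs); apply: (IH _ _ Ht); by rewrite Et.
Qed.

Definition flat st := inp st ++ work st ++ outp st.

Lemma fstep_perm st m st' : fstep st m = Some st' -> perm_eq (flat st') (flat st).
Proof.
case: st => i w o; case: m => k /=; case: ifP => // _ [<-]; rewrite /flat /=.
- by rewrite -catA perm_catCA catA cat_take_drop.
- by rewrite perm_cat2l perm_catCA catA cat_take_drop.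
Qed.

Lemma ftrace_perm st ms tr : ftrace st ms = Some tr -> perm_eq (flat (last st tr)) (flat st).
Proof.
elim: ms st tr => [|m ms IH] st tr /=; first by case=> <-.
case Hs: (fstep st m) => [st'|] //; case Ht: (ftrace st' ms) => [t|] //= [<-].
have [tr' Et] := ftrace_head Ht. rewrite Et /=.
apply: perm_trans (fstep_perm Hs). by have := IH _ _ Ht; rewrite Et.
Qed.
Definition adj (a b : nat) (s : seq nat) := exists s1 s2, s = s1 ++ a :: b :: s2.

Definition Bad st := exists a b,
  (a.+1 < b /\ adj a b (work st)) \/
  (a < b /\ a \in outp st /\ b \in work st) \/
  (a < b /\ exists u v, outp st = u ++ v /\ b \in u /\ a \in v) \/
  (a.+1 < b /\ adj a b (outp st)).

Lemma adj_pre a b s t : adj a b s -> adj a b (t ++ s).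
Proof. by case=> s1 [s2 ->]; exists (t ++ s1), s2; rewrite catA. Qed.

Lemma fstep_bad st m st' : fstep st m = Some st' -> Bad st -> Bad st'.
Proof.
case: st => i w o; case: m => k /=; case: ifP => // _ [<-] [a [b H]];
  exists a, b; move: H => /= H.
- case: H => [[? H]|[[? [? ?]]|[[? H]|[? H]]]] /=.
  + by left; split => //; apply: adj_pre.
  + by right; left; rewrite mem_cat; do ! split => //; apply/orP; right.
  + by right; right; left.
  + by right; right; right.
- case: H => [[ab [s1 [s2 Ew]]]|[[ab [Ha Hb]]|[[ab [u [v [Eo [Hb Ha]]]]]|[ab H]]]] /=.
  + case: (leqP k (size s1)) => Hk.
    * left; split => //; rewrite Ew drop_cat ltn_neqAle Hk andbT.
      case: ifP => _; first by exists (drop k s1), s2.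
      have -> : k - size s1 = 0 by lia.
      by exists [::], s2.
    * case: (leqP k (size s1).+1) => Hk2.
      - have Ek : k = (size s1).+1 by apply/eqP; rewrite eqn_leq Hk2 Hk.
        right; left; split; first by apply: ltnW.
        rewrite Ew Ek drop_cat take_cat ltnNge leqnSn /= subSnn /=.
        by rewrite !mem_cat !inE !eqxx /= orbT.
      - right; right; right; split => //.
        rewrite Ew take_cat ltnNge (ltnW Hk) /=.
        have -> : k - size s1 = (k - size s1 - 2).+2 by lia.
        by exists s1, (take (k - size s1 - 2) s2 ++ o); rewrite /= -catA.
  + rewrite -(cat_take_drop k w) mem_cat in Hb; case/orP: Hb => Hb.
    * right; right; left; split => //; by exists (take k w), o.
    * right; left; do ! split => //; by rewrite mem_cat Ha orbT.
  + right; right; left; split => //; exists (take k w ++ u), v.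
    by rewrite Eo catA; do ! split => //; rewrite mem_cat Hb orbT.
  + by right; right; right; split => //; apply: adj_pre.
Qed.

Lemma ftrace_bad st ms tr i : ftrace st ms = Some tr -> i < size tr ->
  Bad (nth st tr i) -> Bad (last st tr).
Proof.
elim: ms st tr i => [|m ms IH] st tr i /=.
  by case=> <-; case: i.
case Hs: (fstep st m) => [st'|] //; case Ht: (ftrace st' ms) => [t|] //= [<-].
have [tr' Et] := ftrace_head Ht. rewrite Et /=.
case: i => [|j] /= Hi HB.
- have HB' := fstep_bad Hs HB.
  have := IH st' t 0 Ht; rewrite Et /=; apply => //.
- have := IH st' t j Ht; rewrite Et /=; apply => //.
  by rewrite (set_nth_default st) //.
Qed.

Lemma iota_nth n s i : iota 1 n = s -> i < size s -> nth 0 s i = 1 + i.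
Proof. move=> <-; rewrite size_iota => Hi; exact: nth_iota. Qed.

Lemma final_not_bad n : ~ Bad (FState [::] [::] (iota 1 n)).
Proof.
case=> a [b /= [[_ [s1 [s2 /(congr1 size)]]]|[[_ [_ //]]|[[ab [u [v [E [Hb Ha]]]]]|[ab [s1 [s2 E]]]]]]].
- by rewrite size_cat /= addnS.
- have Hi : index b u < size u by rewrite index_mem.
  have Hj : index a v < size v by rewrite index_mem.
  have E1 := iota_nth E (i := index b u).
  have E2 := iota_nth E (i := size u + index a v).
  rewrite nth_cat Hi nth_index // in E1.
  rewrite nth_cat (_ : size u + index a v < size u = false) ?addKn ?nth_index // in E2; last by lia.
  have := E1 _; have := E2 _; rewrite !size_cat.
  move=> H2 H1; have := H2 ltac:(lia); have := H1 ltac:(lia). lia.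
- have E1 := iota_nth E (i := size s1).
  have E2 := iota_nth E (i := (size s1).+1).
  rewrite nth_cat ltnn subnn /= in E1.
  rewrite nth_cat (_ : (size s1).+1 < size s1 = false) ?subSnn /= in E2; last by lia.
  rewrite size_cat /= in E1 E2.
  have := E1 ltac:(lia); have := E2 ltac:(lia). lia.
Qed.

Definition Rn : rel nat := fun x y => y <= x.+1.

Lemma run_split h t : path Rn h t -> exists r rest, h :: t = iota h r.+1 ++ rest /\
  path Rn (h + r) rest /\ (forall z rest', rest = z :: rest' -> z != (h + r).+1).
Proof.
elim: t h => [|z t IH] h /=.
  by move=> _; exists 0, [::]; rewrite addn0.
case/andP=> Hz Hp; case: (eqVneq z h.+1) => [Ez|Nz].
- have [r [rest [E1 [E2 E3]]]] := IH z Hp.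
  subst z; exists r.+1, rest; rewrite E1 -addSnnS; split => //.
- exists 0, (z :: t); rewrite addn0 /= Hz Hp; split => //; split => // z' r' [<- _] //.
Qed.

Lemma below s : forall z y, path Rn z s -> z < y -> y \notin s -> forall u, u \in s -> u < y.
Proof.
elim: s => [|x s IH] z y //= /andP [Hx Hp] zy; rewrite inE negb_or => /andP [Nx Ns] u.
have xy : x < y by rewrite ltn_neqAle eq_sym Nx /=; rewrite /Rn in Hx; lia.
rewrite inE => /orP [/eqP -> //|Hu]; exact: (IH x y Hp xy Ns).
Qed.

Lemma sort_nil n k : perm_eq ([::] ++ iota k (n.+1 - k)) (iota 1 n) -> 0 < k <= n.+1 ->
  reach (FState [::] [::] (iota k (n.+1 - k))) (FState [::] [::] (iota 1 n)).
Proof.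
move=> /perm_size; rewrite /= !size_iota => Hs Hk.
have -> : k = 1 by lia.
rewrite subn1 /=; exact: reach_refl.
Qed.

Lemma sort_work n m : forall w k, size w <= m ->
  perm_eq (w ++ iota k (n.+1 - k)) (iota 1 n) -> 0 < k <= n.+1 -> sorted Rn w ->
  reach (FState [::] w (iota k (n.+1 - k))) (FState [::] [::] (iota 1 n)).
Proof.
elim: m => [|m IH] [|h t] k Hs Hp Hk Hsort; try exact: sort_nil.
  by [].
have [r [rest [E [Hpath Hhd]]]] := run_split Hsort.
set y := h + r in Hpath Hhd.
have Huniq : uniq ((h :: t) ++ iota k (n.+1 - k)) by rewrite (perm_uniq Hp) iota_uniq.
have Hmem : forall u, u \in h :: t -> 0 < u < k.
  move=> u Hu.
  have : u \in iota 1 n by rewrite -(perm_mem Hp) mem_cat Hu.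
  rewrite mem_iota => /andP [H1 H2].
  case: (ltnP u k) => Hl; first by rewrite H1.
  move: Huniq; rewrite cat_uniq => /and3P [_ /hasPn Hn _].
  have := Hn u; rewrite mem_iota Hl /= Hu; move=> H; exfalso.
  have : u < k + (n.+1 - k) by lia.
  by move/H.
rewrite E in Hp Huniq Hmem Hs.
have Hy : y \in iota h r.+1 by rewrite mem_iota /y; lia.
have Hyr : y \notin rest.
  move: Huniq; rewrite -catA cat_uniq => /and3P [_ Hn _].
  apply/negP => Hr; move/hasP: Hn; apply; exists y => //; by rewrite mem_cat Hr.
have Hrest : forall u, u \in rest -> u < y.
  case: rest E Hp Huniq Hmem Hs Hpath Hhd Hyr => [|z rest'] E Hp Huniq Hmem Hs Hpath Hhd Hyr //.
  move: Hpath => /= /andP [Hz Hp'].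
  have Nz := Hhd z rest' erefl.
  move: Hyr; rewrite inE negb_or => /andP [Nzy Nr].
  have zy : z < y by rewrite /Rn in Hz; rewrite ltn_neqAle eq_sym Nzy /=; lia.
  move=> u; rewrite inE => /orP [/eqP -> //|Hu]; exact: (below Hp' zy Nr Hu).
have Hsz := perm_size Hp; rewrite !size_cat !size_iota in Hsz.
have Hk2 : 1 < k by lia.
have Hkm : k.-1 \in iota h r.+1 ++ rest.
  have : k.-1 \in iota 1 n by rewrite mem_iota; lia.
  rewrite -(perm_mem Hp) !mem_cat -orbA => /or3P [-> //|->|]; first by rewrite orbT.
  rewrite mem_iota; lia.
have Hyk : y < k by have := Hmem y; rewrite mem_cat Hy => /(_ erefl) /andP [].
have Ek : k = h + r.+1.
  move: Hkm; rewrite mem_cat => /orP [|/Hrest]; rewrite ?mem_iota /y; lia.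
have Hh : 0 < h by have := Hmem h; rewrite mem_cat mem_iota leqnn /= => /(_ ltac:(lia)) /andP [].
apply: (@reach_step _ (MoveOut r.+1) (FState [::] rest (iota h (n.+1 - h)))).
  rewrite E; cbv beta iota delta [fstep work outp inp]. rewrite size_cat size_iota leq_addr take_size_cat ?size_iota //.
  rewrite drop_size_cat ?size_iota //.
  have -> : n.+1 - h = r.+1 + (n.+1 - k) by lia.
  by rewrite iotaD -Ek.
apply: IH; first by rewrite size_cat size_iota in Hs; lia.
- have -> : n.+1 - h = r.+1 + (n.+1 - k) by lia.
  by rewrite iotaD -Ek perm_catCA catA.
- lia.
- exact: path_sorted Hpath.
Qed.

Lemma d13_bad st : dreaded13 (work st) -> Bad st.
Proof.
case=> j [Hj Hlt]; exists (nth 0 (work st) j), (nth 0 (work st) j.+1); left; split => //.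
exists (take j (work st)), (drop j.+2 (work st)).
rewrite -{1}(cat_take_drop j (work st)) (drop_nth 0) ?(drop_nth 0 (n := j.+1)) //; lia.
Qed.

Theorem proposition1 (n : nat) (pi : seq nat) :
  perm_eq pi (iota 1 n) ->
  (~ fsortable n pi <->
   forall (ms : seq fmove) (tr : seq fstate),
     ftrace (finit pi) ms = Some tr ->
     allowable_out n (outp (last (finit pi) tr)) ->
     inp (last (finit pi) tr) = [::] ->
     exists2 i, i < size tr & dreaded13 (work (nth (finit pi) tr i))).
Proof.
move=> Hpi; split.
- move=> Hns ms tr Ht Hall Hin.
  apply: Classical_Prop.NNPP => Hno; apply: Hns.
  have [tr' Etr] := ftrace_head Ht.
  have Hno' : ~ dreaded13 (work (last (finit pi) tr)).
    move=> Hd; apply: Hno; exists (size tr).-1; first by rewrite Etr.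
    by rewrite nth_last.
  have Hperm := ftrace_perm Ht.
  case: (last (finit pi) tr) Hall Hin Hno' Hperm (reach_trace (fin := FState [::] [::] (iota 1 n)) Ht) => i w o /=.
  case=> k [Hk ->] -> Hd Hp Hr.
  have [ms' [tr'' [H1 H2]]] : reach (finit pi) (FState [::] [::] (iota 1 n)).
    apply: Hr; apply: (sort_work (m := size w)) => //.
    + by apply: perm_trans Hp _; rewrite /flat /= !cats0.
    + case: w Hd {Hp} => [|h t] Hd //=; apply/(pathP 0) => j Hj; rewrite /Rn.
      case: leqP => // Hl; exfalso; apply: Hd; exists j; split => //.
  by exists ms', tr''.
- move=> H [ms [tr [Ht Hl]]].
  have [i Hi Hd] := H ms tr Ht ltac:(rewrite Hl; exists 1; rewrite subn1; split => //; lia) ltac:(by rewrite Hl).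
  have := ftrace_bad Ht Hi (d13_bad Hd); rewrite Hl; exact: final_not_bad.
Qed.
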